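(* Suppose the cost functions $(c_t)_t$ of $\mathcal{L}$ are convex and $L$-Lipschitz (as below). Let $\tau,\beta>0$ and suppose $\mathcal{K}^{\mathrm{sim}}_\tau(\mathcal{L})$ is nonempty. Consider the execution of GPC-Simplex on $\mathcal{L}$ with input $(A,B,\tau,H,\mathcal{I},T)$. If its iterates $(p_t,M_t^{[1:H]})_{t\in[T]}$ satisfy $\|p_t-p_{t+1}\|_1\le\beta$ and $\max_{i\in[H]}\|M_t^{[i]}-M_{t+1}^{[i]}\|_{1\to1}\le\beta$, then for each $t\in[T]$ the loss function $\ell_t$ computed at step $t$ satisfies $$|\ell_t(p_t,M_t^{[1:H]})-c_t(x_t,u_t)|\le O\big(L\tau^3\beta\log^3(1/\beta)\big),$$ where $(x_t,u_t)$ are the actual state and control of the algorithm at time $t$.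
   Context: Notation. $\Delta^d$ is the probability simplex; $\Delta^d_\alpha:=\alpha\Delta^d$. $\mathbb{S}^d$: $d\times d$ column-stochastic matrices; $\mathbb{S}^d_a:=\{aM:M\in\mathbb{S}^d\}$; $\mathbb{S}^d_{[a,b]}:=\bigcup_{a'\in[a,b]}\mathbb{S}^d_{a'}$. $\|M\|_{1\to1}:=\sup_{\|x\|_1=1}\|Mx\|_1$; $M_{\cdot,j}$ is the $j$-th column. $O(\cdot)$ hides a universal constant. Setting. $\mathcal{L}=(A,B,\mathcal{I},x_1,(\gamma_t),(w_t),(c_t))$ is a simplex LDS on $\Delta^d$: $A,B\in\mathbb{S}^d$, $\mathcal{I}=\bigcup_{\alpha\in[\alpha_{\mathrm{lb}},\alpha_{\mathrm{ub}}]}\Delta^d_\alpha$ with $0\le\alpha_{\mathrm{lb}}\le\alpha_{\mathrm{ub}}\le1$, $x_1\in\Delta^d$, $\gamma_t\in[0,1]$, $w_t\in\Delta^d$; given $x_t$, $u_t\in\mathcal{I}$: $x_{t+1}=(1-\gamma_t)[(1-\|u_t\|_1)Ax_t+Bu_t]+\gamma_tw_t$, cost $c_t(x_t,u_t)$. Costs: $c_t$ convex, $|c_t(x,u)-c_t(x',u')|\le L(\|x-x'\|_1+\|u-u'\|_1)$. Protocol: $A,B$ known; at step $t$ the controller observes $x_t$, plays $u_t$, observes $c_t$, then observes $x_{t+1}$ and $\gamma_t$. Mixing: for $X\in\mathbb{S}^d$ with unique stationary distribution $\pi$, $D_X(t):=\sup_{p\in\Delta^d}\|X^tp-\pi\|_1$,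 $t_{\mathrm{mix}}(X):=\min\{t:D_X(t)\le1/4\}$ ($\infty$ otherwise). $C(K):=(1-\|K\|_{1\to1})A+BK$. $\mathcal{K}^{\mathrm{sim}}_\tau(\mathcal{L})$: policies $x\mapsto Kx$ with $K\in\mathbb{S}^d_{[\alpha_{\mathrm{lb}},\alpha_{\mathrm{ub}}]}$, $t_{\mathrm{mix}}(C(K))\le\tau$. Algorithm GPC-Simplex, input $(A,B,\tau,H,\mathcal{I},T)$: $\tau_A:=t_{\mathrm{mix}}(A)$, $a_0:=\max\{\alpha_{\mathrm{lb}},\min\{\alpha_{\mathrm{ub}},\mathbf{1}\{\tau_A>4\tau\}/(96\tau)\}\}$, $\mathcal{X}:=\bigcup_{a\in[a_0,\alpha_{\mathrm{ub}}]}\Delta^d_a\times(\mathbb{S}^d_a)^H$. For $v\in\Delta^d_{\le1}$, $v^c:=1-\sum_jv_j$, $\mathrm{Ent}(v):=v^c\ln\frac1{v^c}+\sum_jv_j\ln\frac1{v_j}$, $R(p,M^{[1:H]}):=-\mathrm{Ent}(p)-\sum_{h,j}\mathrm{Ent}(M^{[h]}_{\cdot,j})$. Conventions $w_0:=x_1$, $\gamma_0:=1$, $w_t:=0$ for $t<0$; $\lambda_{t,i}:=\gamma_{t-i}\prod_{j=1}^{i-1}(1-\gamma_{t-j})$ ($i\ge1$), $\lambda_{t,0}:=1-\sum_{i=1}^H\lambda_{t,i}$. Step size $\eta:=c\sqrt{dH\ln d}/(L\tau^2\log^2(T)\sqrt T)$ for a sufficiently small constant $c$. Initialize $(p_1,M_1^{[1:H]}):=\arg\min_{\mathcal{X}}R$.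 For $t=1,\dots,T$: play $u_t:=\lambda_{t,0}p_t+\sum_{i=1}^H\lambda_{t,i}M_t^{[i]}w_{t-i}$; receive $c_t$; observe $x_{t+1},\gamma_t$, set $w_t:=\gamma_t^{-1}(x_{t+1}-(1-\gamma_t)[(1-\|u_t\|_1)Ax_t+Bu_t])$ ($w_t:=0$ if $\gamma_t=0$); define $\ell_t(p,M^{[1:H]}):=c_t(x_t(p,M^{[1:H]}),u_t(p,M^{[1:H]}))$ where $x_1(p,M^{[1:H]}):=x_1$ and for $s\ge1$: $u_s(p,M^{[1:H]}):=\lambda_{s,0}p+\sum_{j=1}^H\lambda_{s,j}M^{[j]}w_{s-j}$, $x_{s+1}(p,M^{[1:H]}):=(1-\gamma_s)[(1-\|u_s(p,M^{[1:H]})\|_1)Ax_s(p,M^{[1:H]})+Bu_s(p,M^{[1:H]})]+\gamma_sw_s$; update $(p_{t+1},M_{t+1}^{[1:H]}):=\arg\min_{z\in\mathcal{X}}\sum_{s=1}^t\langle z,\nabla\ell_s(p_s,M_s^{[1:H]})\rangle+\frac1\eta R(z)$. *)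

(* Defs.v *)
From HB Require Import structures.
From mathcomp Require Import all_boot all_order all_algebra.
From mathcomp Require Import all_classical all_reals all_analysis.
Set Implicit Arguments. Unset Strict Implicit. Unset Printing Implicit Defensive.
Import Order.TTheory GRing.Theory Num.Theory.
Local Open Scope classical_set_scope.
Local Open Scope ring_scope.

Section SimplexLDS.
Context {R : realType} {d : nat}.
Local Notation vec := 'cV[R]_d.
Local Notation mat := 'M[R]_d.

Definition norm1 (v : vec) : R := \sum_i `|v i 0|.

Definition in_simplex (v : vec) : Prop :=
  (forall i, 0 <= v i 0) /\ \sum_i v i 0 = 1.
Definition simplex_a (a : R) (v : vec) : Prop :=
  exists v0, in_simplex v0 /\ v = a *: v0.

Definition col_stoch (M : mat) : Prop :=
  (forall i j, 0 <= M i j) /\ (forall j, \sum_i M i j = 1).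
Definition stoch_a (a : R) (M : mat) : Prop :=
  exists M0, col_stoch M0 /\ M = a *: M0.
Definition stoch_in (a b : R) (M : mat) : Prop :=
  exists a', a <= a' <= b /\ stoch_a a' M.

Definition opnorm11 (M : mat) : R :=
  sup ((fun x : vec => norm1 (M *m x)) @` [set x : vec | norm1 x = 1]).

Definition uniq_stat (X : mat) (pi : vec) : Prop :=
  in_simplex pi /\ X *m pi = pi /\
  (forall pi', in_simplex pi' -> X *m pi' = pi' -> pi' = pi).

Definition mixD (X : mat) (pi : vec) (t : nat) : R :=
  sup ((fun p : vec => norm1 (iter t (mulmx X) p - pi)) @` [set p | in_simplex p]).

(* t_mix(X) := min { t | D_X(t) <= 1/4 } (with the unique stationary pi),
   +oo if there is no such t or no unique stationary distribution. *)
Definition tmix (X : mat) : \bar R :=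
  ereal_inf [set (t%:R)%:E | t in
    [set t : nat | exists pi, uniq_stat X pi /\ mixD X pi t <= 4^-1]].

Definition CK (A B K : mat) : mat := (1 - opnorm11 K) *: A + B *m K.

Definition Ksim_nonempty (A B : mat) (alb aub tau : R) : Prop :=
  exists K : mat, stoch_in alb aub K /\ (tmix (CK A B K) <= tau%:E)%E.

Definition simplex_lds (A B : mat) (alb aub : R) (x1 : vec)
    (gam : nat -> R) (w : nat -> vec) : Prop :=
  col_stoch A /\ col_stoch B /\ 0 <= alb /\ alb <= aub /\ aub <= 1 /\
  in_simplex x1 /\
  (forall t, (1 <= t)%N -> 0 <= gam t <= 1) /\
  (forall t, (1 <= t)%N -> in_simplex (w t)).

Definition costs_convex (c : nat -> vec -> vec -> R) : Prop :=
  forall t (x x' u u' : vec) (l : R), 0 <= l <= 1 ->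
    c t (l *: x + (1 - l) *: x') (l *: u + (1 - l) *: u')
      <= l * c t x u + (1 - l) * c t x' u'.
Definition costs_lipschitz (L : R) (c : nat -> vec -> vec -> R) : Prop :=
  forall t (x x' u u' : vec),
    `|c t x u - c t x' u'| <= L * (norm1 (x - x') + norm1 (u - u')).

Definition gam0 (gam : nat -> R) (n : nat) : R := if n == 0%N then 1 else gam n.
Definition west0 (x1 : vec) (west : nat -> vec) (n : nat) : vec :=
  if n == 0%N then x1 else west n.

(* lambda_{t,i} := gamma_{t-i} prod_{j=1}^{i-1} (1 - gamma_{t-j}), i >= 1.
   With natural-number subtraction, for i > t the product contains the factor
   (1 - gamma_0) = 0, so lambda_{t,i} = 0, as with the paper's conventions. *)
Definition lam (gam : nat -> R) (t i : nat) : R :=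
  gam0 gam (t - i) * \prod_(1 <= j < i) (1 - gam0 gam (t - j)).
Definition lam0 (H : nat) (gam : nat -> R) (t : nat) : R :=
  1 - \sum_(1 <= i < H.+1) lam gam t i.

(* u_t(p, M^{[1:H]}) ; M h stands for M^{[h]}, h = 1..H *)
Definition uctrl (H : nat) (gam : nat -> R) (x1 : vec) (west : nat -> vec)
    (t : nat) (p : vec) (M : nat -> mat) : vec :=
  lam0 H gam t *: p
  + \sum_(1 <= i < H.+1) lam gam t i *: (M i *m west0 x1 west (t - i)).

Definition step (A B : mat) (g : R) (x u w : vec) : vec :=
  (1 - g) *: ((1 - norm1 u) *: (A *m x) + B *m u) + g *: w.

Fixpoint cfx (A B : mat) (H : nat) (gam : nat -> R) (x1 : vec)
    (west : nat -> vec) (p : vec) (M : nat -> mat) (n : nat) : vec :=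
  match n with
  | 0 => x1
  | m.+1 => if m is 0 then x1 else
      step A B (gam m) (cfx A B H gam x1 west p M m)
           (uctrl H gam x1 west m p M) (west m)
  end.

Definition ell (A B : mat) (H : nat) (gam : nat -> R) (x1 : vec)
    (west : nat -> vec) (c : nat -> vec -> vec -> R) (t : nat)
    (p : vec) (M : nat -> mat) : R :=
  c t (cfx A B H gam x1 west p M t) (uctrl H gam x1 west t p M).

Definition a0 (A : mat) (alb aub tau : R) : R :=
  Num.max alb (Num.min aub
    ((if ((4 * tau)%:E < tmix A)%E then 1 else 0) / (96 * tau))).

Definition inX (amin aub : R) (H : nat) (p : vec) (M : nat -> mat) : Prop :=
  exists a, amin <= a <= aub /\ simplex_a a p /\
            (forall h, (1 <= h <= H)%N -> stoch_a a (M h)).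

(* entropy: x ln(1/x) with 0 ln(1/0) = 0 *)
Definition xlninv (x : R) : R := x * ln x^-1.
Definition Ent (v : vec) : R :=
  xlninv (1 - \sum_j v j 0) + \sum_j xlninv (v j 0).
Definition Reg (H : nat) (p : vec) (M : nat -> mat) : R :=
  - Ent p - \sum_(1 <= h < H.+1) \sum_j Ent (col j (M h)).

Definition inner (H : nat) (p : vec) (M : nat -> mat)
    (gp : vec) (gM : nat -> mat) : R :=
  \sum_i p i 0 * gp i 0 + \sum_(1 <= h < H.+1) \sum_i \sum_j M h i j * gM h i j.

(* step size; c is the (small) universal constant *)
Definition stepsize (c L tau : R) (d' H T : nat) : R :=
  c * Num.sqrt (d'%:R * H%:R * ln d'%:R)
    / (L * tau ^+ 2 * (ln T%:R) ^+ 2 * Num.sqrt T%:R).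

Definition ftrl_obj (H : nat) (etav : R) (gp : nat -> vec) (gM : nat -> nat -> mat)
    (t : nat) (p : vec) (M : nat -> mat) : R :=
  \sum_(1 <= s < t.+1) inner H p M (gp s) (gM s) + etav^-1 * Reg H p M.

End SimplexLDS.

(* Main.v *)
Require Import Defs.
From HB Require Import structures.
From mathcomp Require Import all_boot all_order all_algebra.
From mathcomp Require Import all_classical all_reals all_analysis.
From mathcomp Require Import lra ring zify.
Import Order.TTheory GRing.Theory Num.Theory.
Local Open Scope ring_scope.

Section Aux.
Context {R : realType} {d : nat}.
Local Notation vec := 'cV[R]_d.
Local Notation mat := 'M[R]_d.

Definition ssum (v : vec) : R := \sum_i v i 0.
Definition possum (v : vec) (a : R) : Prop := (forall i, 0 <= v i 0) /\ ssum v = a.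

Lemma norm1_ge0 (v : vec) : 0 <= norm1 v.
Proof. by apply: sumr_ge0 => i _. Qed.

Lemma norm1D (u v : vec) : norm1 (u + v) <= norm1 u + norm1 v.
Proof. rewrite /norm1 -big_split /=; apply: ler_sum => i _; rewrite mxE; exact: ler_normD. Qed.

Lemma norm1Z (k : R) (v : vec) : norm1 (k *: v) = `|k| * norm1 v.
Proof. rewrite /norm1 mulr_sumr; apply: eq_bigr => i _; by rewrite mxE normrM. Qed.

Lemma norm1N (v : vec) : norm1 (- v) = norm1 v.
Proof. rewrite /norm1; apply: eq_bigr => i _; by rewrite mxE normrN. Qed.

Lemma norm10 : norm1 (0 : vec) = 0.
Proof. rewrite /norm1 big1 // => i _; by rewrite mxE normr0. Qed.

Lemma norm1B (u v : vec) : norm1 (u - v) <= norm1 u + norm1 v.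
Proof. by rewrite -(norm1N v) norm1D. Qed.

Lemma norm1BC (u v : vec) : norm1 (u - v) = norm1 (v - u).
Proof. by rewrite -norm1N opprB. Qed.

Lemma norm1_tri (u v z : vec) : norm1 (u - z) <= norm1 (u - v) + norm1 (v - z).
Proof. have -> : u - z = (u - v) + (v - z) by rewrite addrA subrK. exact: norm1D. Qed.

Lemma ssumD (u v : vec) : ssum (u + v) = ssum u + ssum v.
Proof. rewrite /ssum -big_split; apply: eq_bigr => i _; by rewrite mxE. Qed.
Lemma ssumZ (k : R) (v : vec) : ssum (k *: v) = k * ssum v.
Proof. rewrite /ssum mulr_sumr; apply: eq_bigr => i _; by rewrite mxE. Qed.
Lemma ssumN (v : vec) : ssum (- v) = - ssum v.
Proof. rewrite /ssum -sumrN; apply: eq_bigr => i _; by rewrite mxE. Qed.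
Lemma ssumB (u v : vec) : ssum (u - v) = ssum u - ssum v.
Proof. by rewrite ssumD ssumN. Qed.
Lemma ssum0 : ssum (0 : vec) = 0.
Proof. rewrite /ssum big1 // => i _; by rewrite mxE. Qed.

Lemma possum_norm (v : vec) a : possum v a -> norm1 v = a.
Proof. case=> h <-; rewrite /norm1 /ssum; apply: eq_bigr => i _; exact: ger0_norm. Qed.

Lemma colstoch_norm (A : mat) (v : vec) : col_stoch A -> norm1 (A *m v) <= norm1 v.
Proof.
case=> hA hs; rewrite /norm1.
apply: (le_trans (y := \sum_i \sum_j A i j * `|v j 0|)).
  apply: ler_sum => i _; rewrite mxE; apply: (le_trans (ler_norm_sum _ _ _)).
  apply: ler_sum => j _; by rewrite normrM ger0_norm.
rewrite exchange_big /=; apply: ler_sum => j _; by rewrite -mulr_suml hs mul1r.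
Qed.

Lemma colstoch_ssum (A : mat) (v : vec) : col_stoch A -> ssum (A *m v) = ssum v.
Proof.
case=> hA hs; rewrite /ssum.
under eq_bigr do rewrite mxE.
rewrite exchange_big /=; apply: eq_bigr => j _; by rewrite -mulr_suml hs mul1r.
Qed.

Lemma colstoch_possum (A : mat) (v : vec) a : col_stoch A -> possum v a -> possum (A *m v) a.
Proof.
move=> hA [hv hs]; split; last by rewrite colstoch_ssum.
move=> i; rewrite mxE; apply: sumr_ge0 => j _; apply: mulr_ge0 => //; by case: hA.
Qed.

Lemma possumZ (v : vec) a k : 0 <= k -> possum v a -> possum (k *: v) (k * a).
Proof. move=> hk [hv hs]; split; last by rewrite ssumZ hs.
move=> i; rewrite mxE; exact: mulr_ge0. Qed.

Lemma possumD (u v : vec) a b : possum u a -> possum v b -> possum (u + v) (a + b).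
Proof. move=> [hu hsu] [hv hsv]; split; last by rewrite ssumD hsu hsv.
move=> i; rewrite mxE; exact: addr_ge0. Qed.
End Aux.

Section Aux2.
Context {R : realType} {d : nat}.
Local Notation vec := 'cV[R]_d.
Local Notation mat := 'M[R]_d.

Definition nonexp (X : mat) := forall v : vec, norm1 (X *m v) <= norm1 v.

Lemma iterD (X : mat) k (u v : vec) :
  iter k (mulmx X) (u + v) = iter k (mulmx X) u + iter k (mulmx X) v.
Proof. elim: k => //= k ->; by rewrite mulmxDr. Qed.
Lemma iterZ (X : mat) k (a : R) (v : vec) :
  iter k (mulmx X) (a *: v) = a *: iter k (mulmx X) v.
Proof. elim: k => //= k ->; by rewrite scalemxAr. Qed.
Lemma iterN (X : mat) k (v : vec) :
  iter k (mulmx X) (- v) = - iter k (mulmx X) v.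
Proof. by rewrite -scaleN1r iterZ scaleN1r. Qed.
Lemma iterB (X : mat) k (u v : vec) :
  iter k (mulmx X) (u - v) = iter k (mulmx X) u - iter k (mulmx X) v.
Proof. by rewrite iterD iterN. Qed.
Lemma iter0v (X : mat) k : iter k (mulmx X) (0 : vec) = 0.
Proof. elim: k => //= k ->; by rewrite mulmx0. Qed.
Lemma iter_nonexp (X : mat) k (v : vec) : nonexp X -> norm1 (iter k (mulmx X) v) <= norm1 v.
Proof. move=> hX; elim: k => //= k ih; exact: le_trans (hX _) ih. Qed.
Lemma iter_scale (X : mat) k (a : R) (v : vec) :
  iter k (mulmx (a *: X)) v = a ^+ k *: iter k (mulmx X) v.
Proof. elim: k => [|k ih] /=; first by rewrite scale1r.
by rewrite ih -scalemxAl -scalemxAr scalerA exprS. Qed.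

Lemma colstoch_nonexp (A : mat) : col_stoch A -> nonexp A.
Proof. move=> h v; exact: colstoch_norm. Qed.

Lemma norm1_eq0 (v : vec) : norm1 v = 0 -> v = 0.
Proof.
move=> h; apply/matrixP => i j; rewrite (ord1 j) mxE.
rewrite /norm1 in h.
have := psumr_eq0P (fun i _ => normr_ge0 (v i 0)) h.
by move=> /(_ i isT) /normr0_eq0.
Qed.

Lemma mixD_ub (X : mat) (pi : vec) k (q : vec) :
  nonexp X -> in_simplex pi -> in_simplex q ->
  norm1 (iter k (mulmx X) q - pi) <= mixD X pi k.
Proof.
move=> hX hpi hq; rewrite /mixD.
have hn : forall z : vec, in_simplex z -> norm1 z = 1 by move=> z hz; exact: possum_norm hz.
apply: sup_upper_bound; last by exists q.
split; first by exists (norm1 (iter k (mulmx X) q - pi)); exists q.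
exists 2 => y [z hz <-].
apply: (le_trans (norm1B _ _)).
have := iter_nonexp X k z hX; rewrite (hn _ hz) (hn _ hpi) => h.
have -> : (2 : R) = 1 + 1 by [].
exact: lerD.
Qed.

Lemma mix_contract (X : mat) (pi : vec) k (v : vec) :
  nonexp X -> in_simplex pi -> mixD X pi k <= 4^-1 -> ssum v = 0 ->
  norm1 (iter k (mulmx X) v) <= norm1 v / 4.
Proof.
move=> hX hpi hD hv.
pose vp : vec := \col_i Num.max (v i 0) 0.
pose vm : vec := \col_i Num.max (- v i 0) 0.
have hmax : forall y : R, y = Num.max y 0 - Num.max (- y) 0 /\ `|y| = Num.max y 0 + Num.max (- y) 0.
  move=> y; case: (lerP 0 y) => hy.
    have -> : Num.max (- y) 0 = 0 by rewrite max_r // oppr_le0.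
    by rewrite subr0 addr0 ger0_norm.
  have -> : Num.max (- y) 0 = - y by rewrite max_l // oppr_ge0 ltW.
  by rewrite sub0r opprK add0r ltr0_norm.
have hvpm : v = vp - vm.
  apply/matrixP => i j; rewrite (ord1 j) !mxE; exact: (hmax _).1.
have hvp0 : forall i, 0 <= vp i 0 by move=> i; rewrite mxE le_max lexx orbT.
have hvm0 : forall i, 0 <= vm i 0 by move=> i; rewrite mxE le_max lexx orbT.
set m := ssum vp.
have hm : ssum vm = m by move: hv; rewrite hvpm ssumB => /eqP; rewrite subr_eq0 => /eqP h; by rewrite /m h.
have hnv : norm1 v = 2 * m.
  have -> : norm1 v = ssum vp + ssum vm.
    rewrite /norm1 /ssum -big_split /=.
    apply: eq_bigr => i _; rewrite !mxE; exact: (hmax _).2.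
  by rewrite hm -/m mulr2n mulrDl mul1r.
have m0 : 0 <= m by apply: sumr_ge0 => i _.
case: (eqVneq m 0) => hm0.
  have : v = 0 by apply: norm1_eq0; rewrite hnv hm0 mulr0.
  by move=> ->; rewrite iter0v norm10 mul0r.
have mpos : 0 < m by rewrite lt_def hm0 m0.
have minv0 : 0 <= m^-1 by rewrite invr_ge0.
pose q1 := m^-1 *: vp. pose q2 := m^-1 *: vm.
have hs1 : in_simplex q1.
  have := possumZ vp m (m^-1) minv0 (conj hvp0 erefl).
  by rewrite mulVf.
have hs2 : in_simplex q2.
  have := possumZ vm m (m^-1) minv0 (conj hvm0 hm).
  by rewrite mulVf.
have hv' : v = m *: (q1 - q2) by rewrite hvpm scalerBr !scalerA mulfV // !scale1r.
rewrite hnv hv' iterZ norm1Z ger0_norm // iterB.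
have : norm1 (iter k (mulmx X) q1 - iter k (mulmx X) q2) <= 2^-1.
  apply: (le_trans (norm1_tri _ pi _)).
  rewrite (norm1BC pi).
  have h1 := mixD_ub X pi k q1 hX hpi hs1. have h2 := mixD_ub X pi k q2 hX hpi hs2.
  lra.
move=> h; nra.
Qed.


Lemma opnorm_ub (N : mat) (v : vec) : norm1 v = 1 -> norm1 (N *m v) <= opnorm11 N.
Proof.
move=> hv; rewrite /opnorm11; apply: sup_upper_bound; last by exists v.
split; first by exists (norm1 (N *m v)); exists v.
exists (\sum_i \sum_j `|N i j|) => y [z hz <-].
rewrite /norm1; apply: ler_sum => i _; rewrite mxE.
apply: (le_trans (ler_norm_sum _ _ _)); apply: ler_sum => j _.
rewrite normrM; apply: ler_piMr => //.
have : `|z j 0| <= norm1 z.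
  rewrite /norm1 (bigD1 j) //= lerDl; exact: sumr_ge0.
by rewrite hz.
Qed.

Lemma opnorm_scaled (K0 : mat) (a : R) (x1 : vec) :
  col_stoch K0 -> 0 <= a -> in_simplex x1 -> opnorm11 (a *: K0) = a.
Proof.
move=> hK ha hx; apply/eqP; rewrite eq_le; apply/andP; split.
  apply: ge_sup; first by exists (norm1 ((a *: K0) *m x1)); exists x1 => //; exact: possum_norm hx.
  move=> y [z hz <-]; rewrite -scalemxAl norm1Z ger0_norm //.
  by apply: ler_piMr => //; rewrite -hz; exact: colstoch_norm.
have hx1 : norm1 x1 = 1 by exact: possum_norm hx.
have := opnorm_ub (a *: K0) x1 hx1; rewrite -scalemxAl norm1Z ger0_norm //.
by rewrite (possum_norm _ _ (colstoch_possum _ _ _ hK hx)) mulr1.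
Qed.

Lemma tmix_nat (X : mat) (r : R) : (tmix X <= r%:E)%E ->
  exists k : nat, k%:R < r + 2^-1 /\ exists pi, uniq_stat X pi /\ mixD X pi k <= 4^-1.
Proof.
move=> h.
have : (tmix X < (r + 2^-1)%:E)%E.
  apply: (le_lt_trans h); rewrite lte_fin ltrDl; by [].
move/ereal_inf_lt => [y [k hk <-]]; rewrite lte_fin => hlt.
by exists k; split.
Qed.

Lemma perturb (X A : mat) (dl : R) k (v : vec) : nonexp X -> nonexp A -> 0 <= dl ->
  (forall z : vec, norm1 (X *m z - A *m z) <= dl * norm1 z) ->
  norm1 (iter k (mulmx X) v - iter k (mulmx A) v) <= k%:R * dl * norm1 v.
Proof.
move=> hX hA hdl hXA; elim: k => [|k ih] /=.
  by rewrite subrr norm10 mul0r mul0r.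
set a := iter k (mulmx X) v; set b := iter k (mulmx A) v.
have -> : X *m a - A *m b = X *m (a - b) + (X *m b - A *m b).
  by rewrite mulmxBr addrA subrK.
apply: (le_trans (norm1D _ _)).
have h1 := hX (a - b). have h2 := hXA b. have h3 := iter_nonexp A k v hA.
have h4 : dl * norm1 b <= dl * norm1 v by apply: ler_wpM2l.
rewrite -/b in h3; rewrite mulrSr; nra.
Qed.

Lemma CK_props (A B K0 : mat) (a : R) (x1 : vec) :
  col_stoch A -> col_stoch B -> col_stoch K0 -> 0 <= a <= 1 -> in_simplex x1 ->
  nonexp (CK A B (a *: K0)) /\
  (forall z : vec, norm1 (CK A B (a *: K0) *m z - A *m z) <= (2 * a) * norm1 z).
Proof.
move=> hA hB hK /andP [ha0 ha1] hx.
have hX : forall z : vec, CK A B (a *: K0) *m z = (1 - a) *: (A *m z) + a *: (B *m (K0 *m z)).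
  move=> z; rewrite /CK (opnorm_scaled _ _ _ hK ha0 hx) mulmxDl -!scalemxAl -scalemxAr mulmxA.
  by rewrite -scalemxAl.
split.
  move=> z; rewrite hX; apply: (le_trans (norm1D _ _)).
  rewrite !norm1Z (ger0_norm ha0) ger0_norm ?subr_ge0 //.
  have h1 := colstoch_norm _ z hA. have h2 := colstoch_norm _ z hK.
  have h3 := colstoch_norm _ (K0 *m z) hB.
  have h4 := norm1_ge0 z.
  nra.
move=> z; rewrite hX.
have -> : (1 - a) *: (A *m z) + a *: (B *m (K0 *m z)) - A *m z
          = a *: (B *m (K0 *m z) - A *m z).
  by move: (A *m z) (B *m (K0 *m z)) => u1 u2; apply/matrixP => i j; rewrite !mxE; ring.
rewrite norm1Z ger0_norm //.
apply: (le_trans (y := a * (norm1 z + norm1 z))); last by nra.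
apply: ler_wpM2l => //; apply: (le_trans (norm1B _ _)); apply: lerD => //.
  apply: (le_trans (colstoch_norm _ _ hB)); exact: colstoch_norm.
exact: colstoch_norm.
Qed.


Lemma accum (G : mat) (e f : nat -> vec) (c : nat -> R) (t n : nat) (rho beta : R) :
  (1 <= n)%N -> 0 <= rho -> rho < 1 -> 0 <= beta -> nonexp G ->
  (forall s, (1 <= s <= t)%N -> norm1 (iter n (mulmx G) (e s)) <= rho * norm1 (e s)) ->
  e 1%N = 0 ->
  (forall s, (1 <= s)%N -> (s < t)%N -> e s.+1 = c s *: (G *m e s + f s) /\ 0 <= c s <= 1) ->
  (forall s, (1 <= s)%N -> (s < t)%N -> norm1 (f s) <= 2 * beta * (t - s)%:R) ->
  (1 <= t)%N ->
  norm1 (e t) <= 2 * n%:R ^+ 2 * beta * ((1 - rho)^-1) ^+ 2.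
Proof.
move=> hn hr0 hr1 hb hG hcon he1 hrec hf ht.
have block : forall s j, (1 <= s)%N -> (s + j <= t)%N -> exists P, 0 <= P <= 1 /\
    norm1 (e (s + j)%N - P *: iter j (mulmx G) (e s)) <= j%:R * (2 * beta * (t - s)%:R).
  move=> s j hs; elim: j => [|j ih] hsj.
    exists 1; split; first by rewrite ler01 lexx.
    by rewrite addn0 scale1r /= subrr norm10 mul0r.
  have hsj' : (s + j < t)%N by rewrite -addnS.
  have [P [hP hnP]] := ih (ltnW hsj').
  have [hre [hc0 hc1]] := (fun h => (h.1, andP h.2)) (hrec (s + j)%N (leq_trans hs (leq_addr _ _)) hsj').
  exists (c (s + j)%N * P); split.
    case/andP: hP => hP0 hP1; apply/andP; split; first exact: mulr_ge0.
    by rewrite -(mulr1 1) ler_pM.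
  rewrite addnS hre /=.
  set E := e (s + j)%N; set I := iter j (mulmx G) (e s); set F := f (s + j)%N.
  have -> : c (s + j)%N *: (G *m E + F) - (c (s + j)%N * P) *: (G *m I)
       = c (s + j)%N *: (G *m (E - P *: I) + F).
    rewrite mulmxBr -scalemxAr.
    by move: (G *m E) (G *m I) => u1 u2; apply/matrixP => i k; rewrite !mxE; ring.
  rewrite norm1Z ger0_norm //.
  have h1 := hG (E - P *: I).
  have h2 := hf (s + j)%N (leq_trans hs (leq_addr _ _)) hsj'.
  have h3 : ((t - (s + j))%:R : R) <= (t - s)%:R by rewrite ler_nat leq_sub2l // leq_addr.
  have h4 : 0 <= norm1 (G *m (E - P *: I) + F) by exact: norm1_ge0.
  have h5 := norm1D (G *m (E - P *: I)) F.
  have h6 : 0 <= ((t - s)%:R : R) by [].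
  rewrite -/E -/I in hnP.
  apply: (le_trans (y := norm1 (G *m (E - P *: I) + F))); first by nra.
  rewrite -natr1; nra.
set w := (1 - rho)^-1.
have hw : w * (1 - rho) = 1 by rewrite mulVf // subr_eq0 eq_sym lt_eqF.
have hw0 : 0 < w by rewrite /w invr_gt0 subr_gt0.
have hw1 : 1 <= w by nra.
set nR : R := n%:R.
have hn1 : 1 <= nR by rewrite /nR ler1n.
set al := 2 * nR ^+ 2 * beta * w ^+ 2.
set ga := 2 * nR * beta * w.
have hga : ga * (1 - rho) = 2 * nR * beta by rewrite /ga -mulrA hw mulr1.
have hal : al * (1 - rho) = ga * nR by rewrite /al /ga expr2 !mulrA -[_ * w * (1 - rho)]mulrA hw mulr1; ring.
have hga1 : 2 * nR * beta <= ga by rewrite /ga; apply: ler_peMr => //; nra.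
have hal1 : 2 * nR ^+ 2 * beta <= al by rewrite /al; apply: ler_peMr => //; [nra | nra].
suff inv : forall s, (1 <= s <= t)%N -> norm1 (e s) <= al + ga * (t - s)%:R.
  have := inv t; rewrite ht leqnn subnn mulr0 addr0 => /(_ isT) hh.
  by apply: (le_trans hh).
elim/ltn_ind => s ih /andP [hs1 hst].
case: (leqP s n) => hsn.
  have hs' : (1 + (s - 1) = s)%N by rewrite addnC subnK.
  have hst' : (1 + (s - 1) <= t)%N by rewrite hs'.
  have [P [hP hnP]] := block 1%N (s - 1)%N (leqnn _) hst'.
  move: hnP; rewrite hs' he1 iter0v scaler0 subr0 => hnP.
  have hJ : ((s - 1)%:R : R) + 1 <= nR.
    by rewrite /nR natr1 ler_nat subn1 prednK.
  have hJ0 : 0 <= ((s - 1)%:R : R) by [].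
  have hD : ((t - 1)%:R : R) = (t - s)%:R + (s - 1)%:R.
    by rewrite -natrD addnBA // subnK.
  have hD0 : 0 <= ((t - s)%:R : R) by [].
  rewrite hD in hnP.
  move: (t - s)%:R hD0 ((s - 1)%:R : R) hJ hJ0 hnP => D hD0 J hJ hJ0 hnP.
  have h1 : J * D <= nR * D by apply: ler_wpM2r => //; lra.
  have h2 : J * J <= nR * nR by apply: ler_pM => //; lra.
  have h3 : 2 * nR * beta * D <= ga * D by apply: ler_wpM2r.
  have h4 : 2 * beta * (J * D) <= 2 * beta * (nR * D) by apply: ler_wpM2l => //; lra.
  have h5 : 2 * beta * (J * J) <= 2 * beta * (nR * nR) by apply: ler_wpM2l => //; lra.
  rewrite expr2 in hal1.
  have : J * (2 * beta * (D + J)) = 2 * beta * (J * D) + 2 * beta * (J * J) by ring.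
  have : 2 * nR * beta * D = 2 * beta * (nR * D) by ring.
  have : 2 * (nR * nR) * beta = 2 * beta * (nR * nR) by ring.
  move=> e1 e2 e3; lra.
have hs'1 : (1 <= s - n)%N by rewrite subn_gt0.
have hs' : (s - n + n = s)%N by rewrite subnK // ltnW.
have hst' : (s - n + n <= t)%N by rewrite hs'.
have [P [hP hnP]] := block (s - n)%N n hs'1 hst'.
move: hnP; rewrite hs' => hnP.
have hlt : (s - n < s)%N by rewrite ltn_subrL hn (leq_trans hs'1 (leq_subr _ _)).
have hrange : (1 <= s - n <= t)%N by rewrite hs'1 /= (leq_trans (leq_subr _ _) hst).
have hih := ih (s - n)%N hlt hrange.
have hc := hcon (s - n)%N hrange.
have hT : ((t - (s - n))%:R : R) = (t - s)%:R + nR.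
  by rewrite /nR -natrD subnBA ?(ltnW hsn) // addnBAC.
rewrite hT in hnP hih.
have hPn : norm1 (P *: iter n (mulmx G) (e (s - n)%N)) <= rho * norm1 (e (s - n)%N).
  rewrite norm1Z; case/andP: hP => hP0 hP1; rewrite ger0_norm //.
  have := norm1_ge0 (iter n (mulmx G) (e (s - n)%N)); nra.
have htri := norm1_tri (e s) (P *: iter n (mulmx G) (e (s - n)%N)) 0.
rewrite !subr0 in htri.
have hD0 : 0 <= ((t - s)%:R : R) by [].
have hne := norm1_ge0 (e (s - n)%N).
set D := ((t - s)%:R : R) in hnP hih hD0 *.
have : rho * (al + ga * (D + nR)) + nR * (2 * beta * (D + nR)) = al + ga * D.
  have E1 : al = ga * nR + rho * al by rewrite -hal; ring.
  have E2 : ga = 2 * nR * beta + rho * ga by rewrite -hga; ring.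
  have E3 : ga * D = 2 * nR * beta * D + rho * ga * D by rewrite {1}E2; ring.
  have E4 : ga * nR = 2 * nR * beta * nR + rho * ga * nR by rewrite {1}E2; ring.
  lra.
move=> heq.
have hx : norm1 (e s) <= rho * norm1 (e (s - n)%N) + nR * (2 * beta * (D + nR)).
  move: hnP; rewrite /nR; lra.
have hy : rho * norm1 (e (s - n)%N) <= rho * (al + ga * (D + nR)) by apply: ler_wpM2l.
lra.
Qed.


Lemma norm1_sum (I : Type) (r : seq I) (P : pred I) (F : I -> vec) :
  norm1 (\sum_(i <- r | P i) F i) <= \sum_(i <- r | P i) norm1 (F i).
Proof.
apply: (big_rec2 (fun (x : vec) y => norm1 x <= y)); first by rewrite norm10.
move=> i y1 y2 _ h; apply: (le_trans (norm1D _ _)); exact: lerD.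
Qed.

Lemma ssum_sum (I : Type) (r : seq I) (P : pred I) (F : I -> vec) :
  ssum (\sum_(i <- r | P i) F i) = \sum_(i <- r | P i) ssum (F i).
Proof.
apply: (big_rec2 (fun (x : vec) y => ssum x = y)); first by rewrite ssum0.
move=> i y1 y2 _ <-; by rewrite ssumD.
Qed.

Lemma norm1_rev (u v : vec) : `|norm1 u - norm1 v| <= norm1 (u - v).
Proof.
rewrite ler_norml; apply/andP; split.
  have := norm1_tri v u 0; rewrite !subr0 norm1BC; lra.
have := norm1_tri u v 0; rewrite !subr0; lra.
Qed.

Lemma possum_eq (v : vec) a b : possum v a -> a = b -> possum v b.
Proof. by move=> h <-. Qed.

Lemma lam_facts (g : nat -> R) (t : nat) :
  (forall n, 0 <= gam0 g n <= 1) ->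
  (forall i, 0 <= lam g t i) /\
  (forall H, \sum_(1 <= i < H.+1) lam g t i + \prod_(1 <= j < H.+1) (1 - gam0 g (t - j)) = 1) /\
  (forall H, 0 <= \prod_(1 <= j < H.+1) (1 - gam0 g (t - j))).
Proof.
move=> hg.
have hp : forall i, 0 <= \prod_(1 <= j < i) (1 - gam0 g (t - j)).
  move=> i; apply: prodr_ge0 => j _; case/andP: (hg (t - j)%N) => _ h; by rewrite subr_ge0.
split; first by move=> i; apply: mulr_ge0 => //; case/andP: (hg (t - i)%N).
split=> // H; elim: H => [|H ih]; first by rewrite !big_geq // add0r.
rewrite big_nat_recr //= [X in _ + X]big_nat_recr //= -addrA.
have -> : lam g t H.+1 + \prod_(1 <= i < H.+1) (1 - gam0 g (t - i)) * (1 - gam0 g (t - H.+1))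
   = \prod_(1 <= i < H.+1) (1 - gam0 g (t - i)) by rewrite /lam; ring.
exact: ih.
Qed.

Lemma possum_sum (I : Type) (r : seq I) (P : pred I) (F : I -> vec) (G : I -> R) :
  (forall i, P i -> possum (F i) (G i)) ->
  possum (\sum_(i <- r | P i) F i) (\sum_(i <- r | P i) G i).
Proof.
move=> h; apply: (big_rec2 (fun (x : vec) y => possum x y)).
  split; last exact: ssum0. by move=> i; rewrite mxE.
move=> i y1 y2 hi hy; exact: possumD (h i hi) hy.
Qed.

Lemma uctrl_possum H (g : nat -> R) (x1 : vec) (W : nat -> vec) t (P : vec) (Mm : nat -> mat) a :
  (forall n, 0 <= gam0 g n <= 1) -> (forall r, in_simplex (west0 x1 W r)) -> 0 <= a ->
  possum P a -> (forall i, (1 <= i <= H)%N -> exists M0, col_stoch M0 /\ Mm i = a *: M0) ->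
  possum (uctrl H g x1 W t P Mm) a.
Proof.
move=> hg hW ha hP hM.
have [hl0 [hls hpr]] := lam_facts g t hg.
rewrite /uctrl /lam0.
have hsum : possum (\sum_(1 <= i < H.+1) lam g t i *: (Mm i *m west0 x1 W (t - i)))
                   (\sum_(1 <= i < H.+1) lam g t i * a).
  rewrite big_nat [X in possum _ X]big_nat.
  apply: possum_sum => i /andP [hi1 hi2].
  have hiH : (1 <= i <= H)%N by rewrite hi1 -ltnS.
  have [M0 [hM0 ->]] := hM i hiH.
  rewrite -scalemxAl; apply: possumZ => //.
  apply: (possum_eq _ _ _ (possumZ _ _ _ ha (colstoch_possum _ _ _ hM0 (hW (t - i)%N)))).
  by rewrite mulr1.
have hl := hls H.
have h0 : 0 <= 1 - \sum_(1 <= i < H.+1) lam g t i by have := hpr H; lra.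
apply: (possum_eq _ _ _ (possumD _ _ _ _ (possumZ _ _ _ h0 hP) hsum)).
rewrite -mulr_suml; ring.
Qed.


Lemma uctrl_diff H (g : nat -> R) (x1 : vec) (W : nat -> vec) s (P P' : vec) (Mm Mm' : nat -> mat) dl :
  (forall n, 0 <= gam0 g n <= 1) -> norm1 (P - P') <= dl ->
  (forall i, (1 <= i <= H)%N -> norm1 ((Mm i - Mm' i) *m west0 x1 W (s - i)) <= dl) ->
  norm1 (uctrl H g x1 W s P Mm - uctrl H g x1 W s P' Mm') <= dl.
Proof.
move=> hg hP hM.
have [hl0 [hls hpr]] := lam_facts g s hg.
rewrite /uctrl /lam0.
set l0 := 1 - _.
have h0 : 0 <= l0 by rewrite /l0; have := hpr H; have := hls H; lra.
have -> : l0 *: P + \sum_(1 <= i < H.+1) lam g s i *: (Mm i *m west0 x1 W (s - i)) -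
   (l0 *: P' + \sum_(1 <= i < H.+1) lam g s i *: (Mm' i *m west0 x1 W (s - i)))
   = l0 *: (P - P') + \sum_(1 <= i < H.+1) lam g s i *: ((Mm i - Mm' i) *m west0 x1 W (s - i)).
  rewrite scalerBr opprD addrACA; congr (_ + _).
  rewrite -sumrB; apply: eq_bigr => i _; by rewrite mulmxBl scalerBr.
apply: (le_trans (norm1D _ _)).
apply: (le_trans (y := l0 * dl + \sum_(1 <= i < H.+1) lam g s i * dl)); last first.
  rewrite -mulr_suml -mulrDl /l0 subrK mul1r; exact: lexx.
apply: lerD; first by rewrite norm1Z ger0_norm //; exact: ler_wpM2l.
apply: (le_trans (norm1_sum _ _ _ _)).
rewrite big_nat [X in _ <= X]big_nat; apply: ler_sum => i /andP [hi1 hi2].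
rewrite norm1Z ger0_norm //; apply: ler_wpM2l => //; apply: hM.
by rewrite hi1 -ltnS.
Qed.

Lemma step_simplex (A B : mat) g (xx uu ww : vec) a :
  col_stoch A -> col_stoch B -> in_simplex xx -> possum uu a -> 0 <= a <= 1 ->
  in_simplex ww -> 0 <= g <= 1 -> in_simplex (step A B g xx uu ww).
Proof.
move=> hA hB hx hu /andP [ha0 ha1] hw /andP [hg0 hg1].
rewrite /step (possum_norm _ _ hu).
have h1 : 0 <= 1 - a by rewrite subr_ge0.
have h2 : 0 <= 1 - g by rewrite subr_ge0.
have := possumD _ _ _ _ (possumZ _ _ _ h2 (possumD _ _ _ _ (possumZ _ _ _ h1 (colstoch_possum _ _ _ hA hx)) (colstoch_possum _ _ _ hB hu))) (possumZ _ _ _ hg0 hw).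
move/possum_eq; apply; ring.
Qed.

Lemma step_diff (A B : mat) g (X1 X2 U1 U2 W : vec) :
  step A B g X1 U1 W - step A B g X2 U2 W =
  (1 - g) *: (((1 - norm1 U1) *: A) *m (X1 - X2) +
     ((norm1 U2 - norm1 U1) *: (A *m X2) + B *m (U1 - U2))).
Proof.
rewrite /step -scalemxAl !mulmxBr.
move: (A *m X1) (A *m X2) (B *m U1) (B *m U2) (norm1 U1) (norm1 U2) => a1 a2 b1 b2 n1 n2.
apply/matrixP => i j; rewrite !mxE; ring.
Qed.


Lemma inX_props amin aub H (g : nat -> R) (x1 : vec) (W : nat -> vec) (P : vec) (Mm : nat -> mat) :
  inX amin aub H P Mm -> 0 <= amin ->
  (forall n, 0 <= gam0 g n <= 1) -> (forall r, in_simplex (west0 x1 W r)) ->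
  (amin <= norm1 P <= aub) /\ forall s', possum (uctrl H g x1 W s' P Mm) (norm1 P).
Proof.
move=> [a [har [[p0 [hp0 ->]] hM]]] hamin hg hW.
have ha0 : 0 <= a by case/andP: har => h _; exact: le_trans h.
have hpa : possum (a *: p0) a by apply: (possum_eq _ _ _ (possumZ _ _ _ ha0 hp0)); rewrite mulr1.
rewrite (possum_norm _ _ hpa); split => // s'.
apply: uctrl_possum => //.
Qed.

End Aux2.

Theorem lemma7 (R : realType) :
  exists (C c0 beta0 : R), 0 < c0 /\ 0 < beta0 /\
  forall (c : R), 0 < c -> c <= c0 ->
  forall (d H T : nat) (A B : 'M[R]_d) (alb aub : R) (x1 : 'cV[R]_d)
    (gam : nat -> R) (w : nat -> 'cV[R]_d) (cost : nat -> 'cV[R]_d -> 'cV[R]_d -> R)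
    (L tau beta : R)
    (p : nat -> 'cV[R]_d) (M : nat -> nat -> 'M[R]_d)
    (gp : nat -> 'cV[R]_d) (gM : nat -> nat -> 'M[R]_d)
    (x u west : nat -> 'cV[R]_d),
  simplex_lds A B alb aub x1 gam w ->
  costs_convex cost -> costs_lipschitz L cost ->
  0 < tau -> 0 < beta -> beta <= beta0 -> (1 <= T)%N ->
  Ksim_nonempty A B alb aub tau ->
  (* initialization: (p_1, M_1) = argmin_X R *)
  inX (a0 A alb aub tau) aub H (p 1%N) (M 1%N) ->
  (forall (p' : 'cV[R]_d) (M' : nat -> 'M[R]_d), inX (a0 A alb aub tau) aub H p' M' ->
     Reg H (p 1%N) (M 1%N) <= Reg H p' M') ->
  (* actual execution *)
  x 1%N = x1 ->
  (forall t, (1 <= t <= T)%N -> u t = uctrl H (gam0 gam) x1 west t (p t) (M t)) ->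
  (forall t, (1 <= t <= T)%N -> x t.+1 = step A B (gam t) (x t) (u t) (w t)) ->
  (forall t, (1 <= t <= T)%N ->
     west t = if gam t == 0 then 0 else
       (gam t)^-1 *: (x t.+1 - (1 - gam t) *:
          ((1 - norm1 (u t)) *: (A *m x t) + B *m u t))) ->
  (* FTRL updates, with (gp s, gM s) the gradient of ell_s at (p_s, M_s) *)
  (forall t, (1 <= t <= T)%N ->
     inX (a0 A alb aub tau) aub H (p t.+1) (M t.+1) /\
     (forall (p' : 'cV[R]_d) (M' : nat -> 'M[R]_d), inX (a0 A alb aub tau) aub H p' M' ->
        ftrl_obj H (stepsize c L tau d H T) gp gM t (p t.+1) (M t.+1)
          <= ftrl_obj H (stepsize c L tau d H T) gp gM t p' M')) ->
  (* stability of the iterates *)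
  (forall t, (1 <= t <= T)%N ->
     norm1 (p t - p t.+1) <= beta /\
     (forall i, (1 <= i <= H)%N -> opnorm11 (M t i - M t.+1 i) <= beta)) ->
  forall t, (1 <= t <= T)%N ->
    `| ell A B H (gam0 gam) x1 west cost t (p t) (M t) - cost t (x t) (u t) |
      <= C * L * tau ^+ 3 * beta * (ln beta^-1) ^+ 3.
Proof.
exists (96 ^+ 4), 1, (expR (-1)).
split; first exact: ltr01.
split; first exact: expR_gt0.
move=> c hc0 hc1 d H T A B alb aub x1 gam w cost L tau beta p M gp gM x u west
  hlds hconv hlip htau hbeta hbeta0 hT hKs hinit _ hx1e hu hx hwest hftrl hstab t ht.
case: hlds => hA [hB [halb [hab [haub [hx1 [hgam hw]]]]]].
set amin := a0 A alb aub tau.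
have hg1 : forall n, (1 <= n)%N -> gam0 (gam0 gam) n = gam n.
  by move=> n hn; rewrite /gam0; case: eqP => // hn0; move: hn; rewrite hn0.
have Hg : forall n, 0 <= gam0 (gam0 gam) n <= 1.
  move=> n; case: (posnP n) => [->|hn]; first by rewrite /gam0 eqxx ler01 lexx.
  rewrite hg1 //; exact: hgam.
have hWs : forall r, in_simplex (west0 x1 w r).
  move=> r; rewrite /west0; case: eqP => [_|/eqP hr] //; apply: hw; by rewrite lt0n.
have hamin : 0 <= amin by rewrite /amin /a0 le_max halb.
have hinX : forall s, (1 <= s <= T.+1)%N -> inX amin aub H (p s) (M s).
  move=> [|[|k]] // /andP [_ hk].
  by apply: (hftrl k.+1 _).1; rewrite ltnS in hk; rewrite hk.
have hwe : forall r, (1 <= r <= T)%N -> gam r = 0 \/ west r = w r.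
  move=> r hr; rewrite (hwest r hr); case: eqP => [->|/eqP hg]; [by left | right].
  rewrite (hx r hr) /step addrAC subrr add0r scalerA mulVf // scale1r //.
have hstw : forall r, (1 <= r <= T)%N -> forall xx uu,
    step A B (gam r) xx uu (west r) = step A B (gam r) xx uu (w r).
  move=> r hr xx uu; case: (hwe r hr) => [h|->] //; by rewrite /step h !scale0r.
have huw : forall s P Mm, (s <= T)%N ->
    uctrl H (gam0 gam) x1 west s P Mm = uctrl H (gam0 gam) x1 w s P Mm.
  move=> s P Mm hs; rewrite /uctrl; congr (_ + _).
  rewrite big_nat [RHS]big_nat; apply: eq_bigr => i /andP [hi1 hi2].
  rewrite /west0; case: eqP => // /eqP hr.
  have hr' : (1 <= s - i <= T)%N by rewrite lt0n hr /= (leq_trans (leq_subr _ _) hs).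
  case: (hwe _ hr') => [hg|->] //.
  by rewrite /lam hg1 ?hg ?mul0r ?scale0r //; case/andP: hr'.
have hxs : forall s, (1 <= s <= T.+1)%N -> in_simplex (x s).
  elim=> [|[|k] ih] //; first by rewrite hx1e.
  move=> /andP [_ hk]; rewrite ltnS in hk.
  have hk' : (1 <= k.+1 <= T)%N by rewrite hk.
  have hk'' : (1 <= k.+1 <= T.+1)%N by rewrite /= ltnW.
  have [hr hps] := inX_props _ _ _ _ _ _ _ _ (hinX k.+1 hk'') hamin Hg hWs.
  rewrite hx // hu // huw //.
  apply: (step_simplex _ _ _ _ _ _ (norm1 (p k.+1)) hA hB _ (hps _) _ (hw _ _) (hgam _ _)) => //.
    by apply: ih; rewrite /= ltnW.
  by case/andP: hr => h1 h2; rewrite (le_trans hamin h1) (le_trans h2 haub).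
have htel : forall s k, (1 <= s)%N -> (s + k <= T.+1)%N ->
    norm1 (p (s + k)%N - p s) <= k%:R * beta /\
    forall i (v : 'cV[R]_d), (1 <= i <= H)%N -> norm1 v = 1 ->
      norm1 ((M (s + k)%N i - M s i) *m v) <= k%:R * beta.
  move=> s k hs; elim: k => [|k ih] hk.
    rewrite addn0 subrr norm10 mul0r; split => // i v _ _.
    by rewrite subrr mul0mx norm10.
  have hk1 : (s + k <= T.+1)%N by apply: ltnW; rewrite -addnS.
  have [ihp ihM] := ih hk1.
  have hr : (1 <= s + k <= T)%N.
    by rewrite (leq_trans hs (leq_addr _ _)) /= -ltnS -addnS.
  have [sp sM] := hstab _ hr.
  rewrite addnS; split.
    apply: (le_trans (norm1_tri _ (p (s + k)%N) _)).
    rewrite norm1BC -natr1 mulrDl mul1r addrC; exact: lerD.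
  move=> i v hi hv.
  have -> : (M (s + k).+1 i - M s i) *m v =
     - ((M (s + k)%N i - M (s + k).+1 i) *m v) + (M (s + k)%N i - M s i) *m v.
    by rewrite -mulNmx -mulmxDl opprB addrA subrK.
  apply: (le_trans (norm1D _ _)); rewrite norm1N -natr1 mulrDl mul1r [_ + beta]addrC.
  apply: lerD; last exact: ihM.
  apply: (le_trans (opnorm_ub _ _ hv)); exact: sM.
case/andP: ht => ht1 htT.
have htT1 : (1 <= t <= T.+1)%N by rewrite ht1 (leq_trans htT (leqnSn _)).
have [hra hut] := inX_props _ _ _ _ _ _ _ _ (hinX t htT1) hamin Hg hWs.
set a := norm1 (p t) in hra hut.
have ha01 : 0 <= a <= 1.
  by case/andP: hra => h1 h2; rewrite (le_trans hamin h1) (le_trans h2 haub).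
set xt := fun s => cfx A B H (gam0 gam) x1 west (p t) (M t) s.
have hcfxS : forall k, (1 <= k)%N -> xt k.+1 =
    step A B (gam0 gam k) (xt k) (uctrl H (gam0 gam) x1 west k (p t) (M t)) (west k).
  by move=> [|k].
have hgk : forall k, (1 <= k)%N -> gam0 gam k = gam k by move=> [|k].
have hxt : forall s, (1 <= s <= t)%N -> in_simplex (xt s).
  elim=> [|[|k] ih] //.
  move=> /andP [_ hk].
  have hkT : (1 <= k.+1 <= T)%N by rewrite /= (leq_trans (ltnW hk) htT).
  rewrite hcfxS // hgk // hstw // huw; last by case/andP: hkT.
  apply: (step_simplex _ _ _ _ _ _ a hA hB _ (hut _) ha01 (hw _ _) (hgam _ _)) => //.
  by apply: ih; rewrite /= ltnW.
pose e := fun s => xt s - x s.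
pose ut := fun s => uctrl H (gam0 gam) x1 w s (p t) (M t).
pose us := fun s => uctrl H (gam0 gam) x1 w s (p s) (M s).
pose G := (1 - a) *: A.
pose f := fun s => (norm1 (us s) - a) *: (A *m x s) + B *m (ut s - us s).
have hrec : forall s, (1 <= s)%N -> (s < t)%N ->
    e s.+1 = (1 - gam s) *: (G *m e s + f s) /\ 0 <= 1 - gam s <= 1.
  move=> s hs1 hst.
  have hsT : (1 <= s <= T)%N by rewrite hs1 /= (leq_trans (ltnW hst) htT).
  have hsT' : (s <= T)%N by case/andP: hsT.
  split; last by case/andP: (hgam s hs1) => h1 h2; rewrite subr_ge0 h2 gerBl h1.
  rewrite /e hcfxS // hgk // hstw // huw // hx // hu // huw // step_diff.
  by rewrite (possum_norm _ _ (hut s)).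
have hdu : forall s, (1 <= s)%N -> (s < t)%N -> norm1 (ut s - us s) <= (t - s)%:R * beta.
  move=> s hs1 hst.
  have hst' : (s + (t - s) <= T.+1)%N by rewrite subnKC ?(ltnW hst) // (leq_trans htT (leqnSn _)).
  have [tp tM] := htel s (t - s)%N hs1 hst'.
  rewrite subnKC ?(ltnW hst) // in tp tM.
  apply: uctrl_diff => // i hi; apply: tM => //; exact: possum_norm (hWs _).
have hf : forall s, (1 <= s)%N -> (s < t)%N -> norm1 (f s) <= 2 * beta * (t - s)%:R.
  move=> s hs1 hst.
  have hsT : (1 <= s <= T.+1)%N by rewrite hs1 /= (leq_trans (ltnW hst) (leq_trans htT (leqnSn _))).
  have hxn : norm1 (A *m x s) <= 1.
    rewrite -(possum_norm _ _ (hxs s hsT)); exact: colstoch_norm.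
  have h1 := hdu s hs1 hst.
  have h2 : `|norm1 (us s) - a| <= norm1 (ut s - us s).
    have ha' : a = norm1 (ut s) by rewrite (possum_norm _ _ (hut s)).
    rewrite {1}ha' norm1BC; exact: norm1_rev.
  have h3 : norm1 (B *m (ut s - us s)) <= norm1 (ut s - us s) by exact: colstoch_norm.
  apply: (le_trans (norm1D _ _)); rewrite norm1Z.
  have h4 := normr_ge0 (norm1 (us s) - a).
  have h5 := norm1_ge0 (A *m x s).
  have h6 : `|norm1 (us s) - a| * norm1 (A *m x s) <= `|norm1 (us s) - a| by nra.
  nra.
have he1 : e 1%N = 0 by rewrite /e /= hx1e subrr.
have hzero : forall s, (1 <= s <= t)%N -> ssum (e s) = 0.
  move=> s hs; rewrite /e ssumB.
  have hsT : (1 <= s <= T.+1)%N by case/andP: hs => h1 h2; rewrite h1 (leq_trans h2 (leq_trans htT (leqnSn _))).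
  rewrite /ssum; by case: (hxt s hs) => _ ->; case: (hxs s hsT) => _ ->; rewrite subrr.
have hGn : nonexp G.
  move=> v; rewrite /G -scalemxAl norm1Z; case/andP: ha01 => h1 h2.
  rewrite ger0_norm ?subr_ge0 //; have := colstoch_norm _ v hA; have := norm1_ge0 (A *m v); nra.
have hL : 0 <= L.
  have := hlip 0%N x1 0 0 0; rewrite subr0 subrr norm10 addr0 (possum_norm _ _ hx1) mulr1.
  exact: le_trans (normr_ge0 _).
have hlog : 1 <= ln beta^-1.
  have hb1 : expR 1 <= beta^-1.
    rewrite -[expR 1]invrK -expRN lef_pV2 ?posrE ?expR_gt0 ?invr_gt0 //.
  by rewrite -[X in X <= _](expRK 1) ler_ln ?posrE ?expR_gt0 ?invr_gt0.
suff hE : norm1 (e t) <= 96 ^+ 4 * tau ^+ 3 * beta.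
  rewrite /ell hu; last by rewrite ht1 htT.
  apply: (le_trans (hlip _ _ _ _ _)); rewrite subrr norm10 addr0.
  have hl3 : 1 <= (ln beta^-1) ^+ 3 by apply: exprn_ege1.
  have hK : 0 <= 96 ^+ 4 * tau ^+ 3 * beta.
    apply: mulr_ge0; last exact: ltW. apply: mulr_ge0 => //. apply: exprn_ge0; exact: ltW.
  have h1 : L * norm1 (e t) <= L * (96 ^+ 4 * tau ^+ 3 * beta) by apply: ler_wpM2l.
  have -> : 96 ^+ 4 * L * tau ^+ 3 * beta * ln beta^-1 ^+ 3 =
            (L * (96 ^+ 4 * tau ^+ 3 * beta)) * ln beta^-1 ^+ 3 by ring.
  apply: (le_trans h1); apply: ler_peMr => //; exact: mulr_ge0.
have ht0 : 0 <= tau by exact: ltW.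
have hb0 : 0 <= beta by exact: ltW.
have h96 : 0 < 96 * tau by apply: mulr_gt0.
case: (lerP (96 * tau)^-1 a) => hacase.
  have hq0 : 0 < (96 * tau)^-1 by rewrite invr_gt0.
  have hapos : 0 < a by exact: lt_le_trans hq0 hacase.
  case/andP: ha01 => ha0 ha1.
  have hcon : forall s, (1 <= s <= t)%N ->
      norm1 (iter 1 (mulmx G) (e s)) <= (1 - a) * norm1 (e s).
    move=> s _ /=; rewrite /G -scalemxAl norm1Z ger0_norm ?subr_ge0 //.
    apply: ler_wpM2l; [by rewrite subr_ge0 | exact: colstoch_norm].
  have hr0 : 0 <= 1 - a by rewrite subr_ge0.
  have hr1 : 1 - a < 1 by rewrite gtrBl.
  have := accum G e f (fun s => 1 - gam s) t 1 (1 - a) beta (leqnn 1)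
    hr0 hr1 hb0 hGn hcon he1 hrec hf ht1.
  have -> : 1 - (1 - a) = a by ring.
  set y := a^-1; set z := 96 * tau.
  have hy : y <= z by rewrite /y -[z]invrK lef_pV2 ?posrE ?invr_gt0.
  have hy1 : 1 <= y by rewrite /y invr_ge1 ?unitfE ?gt_eqF.
  have hz1 : 1 <= z by exact: le_trans hy1 hy.
  have e1 : y ^+ 2 <= z * z by rewrite expr2; nra.
  have e2 : z * z <= z * z * z by nra.
  have E : 96 ^+ 4 * tau ^+ 3 = 96 * (z * z * z) by rewrite /z; ring.
  rewrite E => hh; apply: (le_trans hh).
  rewrite expr1n mulr1.
  have e3 : 2 * beta * y ^+ 2 <= 2 * beta * (z * z * z) by apply: ler_wpM2l; nra.
  have e4 : 0 <= beta * (z * z * z) by apply: mulr_ge0 => //; nra.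
  nra.
(* case 2: small control mass; A contracts zero-sum vectors *)
have hkex : exists k : nat,
    (forall v : 'cV[R]_d, ssum v = 0 -> norm1 (iter k (mulmx A) v) <= norm1 v / 2) /\
    k%:R <= 8 * tau.
  have hk01 : forall k : nat, k = 0%N \/ 1 <= (k%:R : R).
    by move=> [|k]; [left | right; rewrite ler1n].
  case: (boolP ((4 * tau)%:E < tmix A)%E) => htm.
    have hamin_lt : amin < (96 * tau)^-1 by exact: le_lt_trans (proj1 (andP hra)) hacase.
    have haub_lt : aub < (96 * tau)^-1.
      move: hamin_lt; rewrite /amin /a0 htm div1r.
      move=> hlt; have : Num.min aub (96 * tau)^-1 < (96 * tau)^-1.
        by apply: le_lt_trans hlt; rewrite le_max lexx orbT.
      by rewrite gt_min ltxx orbF.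
    case: hKs => K [[a' [/andP [ha'1 ha'2] [K0 [hK0 hKe]]]] htK].
    rewrite hKe in htK.
    have [k [hk [pi [hpi hD]]]] := tmix_nat _ _ htK.
    have ha'01 : 0 <= a' <= 1 by rewrite (le_trans halb ha'1) (le_trans ha'2 haub).
    have [hXn hXA] := CK_props A B K0 a' x1 hA hB hK0 ha'01 hx1.
    have ha'0 : 0 <= a' by exact: le_trans halb ha'1.
    have hkb : k%:R <= 2 * tau by case: (hk01 k) => [-> | h]; [rewrite mulr_ge0 | lra].
    exists k; split; last by lra.
    move=> v hv.
    have h1 := mix_contract _ pi k v hXn (proj1 hpi) hD hv.
    have h2a : 0 <= 2 * a' by rewrite mulr_ge0.
    have h2 := perturb _ A (2 * a') k v hXn (colstoch_nonexp _ hA) h2a hXA.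
    have h3 := norm1_tri (iter k (mulmx A) v) (iter k (mulmx (CK A B (a' *: K0))) v) 0.
    rewrite !subr0 norm1BC in h3.
    have hq : tau * (96 * tau)^-1 = 96^-1 by field; rewrite gt_eqF.
    have h4 : k%:R * (2 * a') <= 24^-1.
      have hlt : a' <= (96 * tau)^-1 by apply: ltW; exact: le_lt_trans ha'2 haub_lt.
      have s1 : k%:R * a' <= 2 * tau * a' by apply: ler_wpM2r.
      have s2 : tau * a' <= tau * (96 * tau)^-1 by apply: ler_wpM2l.
      rewrite hq in s2.
      have -> : k%:R * (2 * a') = 2 * (k%:R * a') by ring.
      have -> : (24^-1 : R) = 4 * 96^-1 by field.
      lra.
    have h5 := norm1_ge0 v.
    have h6 : k%:R * (2 * a') * norm1 v <= 24^-1 * norm1 v by apply: ler_wpM2r.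
    lra.
  have htm' : (tmix A <= (4 * tau)%:E)%E by rewrite leNgt.
  have [k [hk [pi [hpi hD]]]] := tmix_nat _ _ htm'.
  have hkb : k%:R <= 8 * tau by case: (hk01 k) => [-> | h]; [rewrite mulr_ge0 | lra].
  exists k; split => // v hv.
  have h1 := mix_contract _ pi k v (colstoch_nonexp _ hA) (proj1 hpi) hD hv.
  have h5 := norm1_ge0 v.
  lra.
have [k [hkc hk8]] := hkex.
case: (posnP k) => hk0.
  have htt : (1 <= t <= t)%N by rewrite ht1 leqnn.
  have := hkc (e t) (hzero t htt).
  rewrite hk0 /= => hh.
  have hn0 := norm1_ge0 (e t).
  have hK : 0 <= 96 ^+ 4 * tau ^+ 3 * beta.
    apply: mulr_ge0 => //; apply: mulr_ge0 => //; exact: exprn_ge0.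
  lra.
case/andP: ha01 => ha0 ha1.
have hcon : forall s, (1 <= s <= t)%N ->
    norm1 (iter k (mulmx G) (e s)) <= 2^-1 * norm1 (e s).
  move=> s hs; rewrite /G iter_scale norm1Z ger0_norm ?exprn_ge0 ?subr_ge0 //.
  have h1 := hkc (e s) (hzero s hs).
  have h2 : (1 - a) ^+ k <= 1 by apply: exprn_ile1; rewrite ?subr_ge0 ?gerBl.
  have h3 := norm1_ge0 (iter k (mulmx A) (e s)).
  have h4 : (1 - a) ^+ k * norm1 (iter k (mulmx A) (e s)) <= norm1 (iter k (mulmx A) (e s)).
    by apply: ler_piMl.
  lra.
have hr0 : 0 <= (2^-1 : R) by [].
have hr1 : (2^-1 : R) < 1 by rewrite invr_lt1 ?unitfE // ltr1n.
have := accum G e f (fun s => 1 - gam s) t k 2^-1 beta hk0 hr0 hr1 hb0 hGn hcon he1 hrec hf ht1.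
have -> : (1 - 2^-1 : R)^-1 = 2.
  have -> : (1 - 2^-1 : R) = 2^-1 by field.
  by rewrite invrK.
move=> hh; apply: (le_trans hh).
set K : R := k%:R in hk8 *.
have hK1 : 1 <= K by rewrite /K ler1n.
set z := 8 * tau in hk8.
have hz1 : 1 <= z by exact: le_trans hK1 hk8.
have e1 : K ^+ 2 <= z * z by rewrite expr2; apply: ler_pM => //; lra.
have e2 : z * z <= z * z * z by rewrite -{1}(mulr1 (z * z)); apply: ler_wpM2l => //; nra.
have E : 96 ^+ 4 * tau ^+ 3 = (96 ^+ 4 / 512) * (z * z * z) by rewrite /z; field.
rewrite E.
have e3 : K ^+ 2 <= z * z * z by exact: le_trans e1 e2.
have e4 : 2 * K ^+ 2 * beta * 2 ^+ 2 = 8 * beta * K ^+ 2 by ring.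
rewrite e4.
have e5 : 8 * beta * K ^+ 2 <= 8 * beta * (z * z * z) by apply: ler_wpM2l => //; lra.
have e6 : 0 <= beta * (z * z * z) by apply: mulr_ge0 => //; nra.
have -> : 96 ^+ 4 / 512 * (z * z * z) * beta = (96 ^+ 4 / 512) * (beta * (z * z * z)) by ring.
lra.
Qed.
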